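(* Let $(X,\widetilde{\tau},\mathfrak{a}_E,E)$ be a soft aura topological space. If it is soft $\mathfrak{a}$-$T_3$ then it is soft $\mathfrak{a}$-$T_2$; it is soft $\mathfrak{a}$-$T_2$ if and only if it is soft $\mathfrak{a}$-$T_1$; and if it is soft $\mathfrak{a}$-$T_1$ then it is soft $\mathfrak{a}$-$T_0$.
   Context: For a nonempty set $X$ and nonempty parameter set $E$, a soft set is a map $F:E\to\mathcal{P}(X)$, written $(F,E)$. A soft topology $\widetilde{\tau}$ is a family of soft sets containing the soft sets with all values $\emptyset$ and all values $X$, closed under arbitrary parameterwise unions and finite parameterwise intersections. A soft scope function is a map $\mathfrak{a}_E:X\to\widetilde{\tau}$ with $x\in\mathfrak{a}_E(x)(e)$ for all $x\in X,e\in E$; $(X,\widetilde{\tau},\mathfrak{a}_E,E)$ is a soft aura topological space. $\mathrm{int}_{\mathfrak{a}}(G,E)(e)=\{x:\mathfrak{a}_E(x)(e)\subseteq G(e)\}$; $(G,E)$ is soft $\mathfrak{a}$-open if $\mathrm{int}_{\mathfrak{a}}(G,E)=(G,E)$ and soft $\mathfrak{a}$-closed if its parameterwise complement is soft $\mathfrak{a}$-open. The space is: soft $\mathfrak{a}$-$T_0$ if for all distinct $x,y$ there is $e\in E$ with $y\notin\mathfrak{a}_E(x)(e)$ or $x\notin\mathfrak{a}_E(y)(e)$; soft $\mathfrak{a}$-$T_1$ if for all distinct $x,y$ and all $e$, $y\notin\mathfrak{a}_E(x)(e)$ and $x\notin\mathfrak{a}_E(y)(e)$; soft $\mathfrak{a}$-$T_2$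 if for all distinct $x,y$ and all $e$, $\mathfrak{a}_E(x)(e)\cap\mathfrak{a}_E(y)(e)=\emptyset$; soft $\mathfrak{a}$-regular if for every $x\in X$, $e\in E$ and soft $\mathfrak{a}$-closed $(C,E)$ with $x\notin C(e)$ there are soft $\mathfrak{a}$-open $(U,E),(V,E)$ with $x\in U(e)$, $C(e)\subseteq V(e)$, $U(e)\cap V(e)=\emptyset$; soft $\mathfrak{a}$-$T_3$ if soft $\mathfrak{a}$-regular and soft $\mathfrak{a}$-$T_1$. *)

(* Defs.v *)
Set Implicit Arguments.

Definition soft_set (X E : Type) := E -> X -> Prop.

Definition soft_empty (X E : Type) : soft_set X E := fun _ _ => False.
Definition soft_full (X E : Type) : soft_set X E := fun _ _ => True.

Record soft_topology (X E : Type) (tau : soft_set X E -> Prop) : Prop := {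
  st_empty : tau (@soft_empty X E);
  st_full  : tau (@soft_full X E);
  st_union : forall (I : Type) (G : I -> soft_set X E),
      (forall i, tau (G i)) ->
      tau (fun e x => exists i, G i e x);
  st_inter : forall F G : soft_set X E,
      tau F -> tau G -> tau (fun e x => F e x /\ G e x)
}.

Definition soft_scope (X E : Type) (tau : soft_set X E -> Prop)
  (a : X -> soft_set X E) : Prop :=
  (forall x, tau (a x)) /\ (forall x e, a x e x).

Definition aint (X E : Type) (a : X -> soft_set X E) (G : soft_set X E)
  : soft_set X E :=
  fun e x => forall y, a x e y -> G e y.

Definition soft_a_open (X E : Type) (a : X -> soft_set X E) (G : soft_set X E)
  : Prop := aint a G = G.

Definition soft_compl (X E : Type) (G : soft_set X E) : soft_set X E :=
  fun e x => ~ G e x.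

Definition soft_a_closed (X E : Type) (a : X -> soft_set X E) (C : soft_set X E)
  : Prop := soft_a_open a (soft_compl C).

Definition soft_a_T0 (X E : Type) (a : X -> soft_set X E) : Prop :=
  forall x y : X, x <> y -> exists e : E, ~ a x e y \/ ~ a y e x.

Definition soft_a_T1 (X E : Type) (a : X -> soft_set X E) : Prop :=
  forall x y : X, x <> y -> forall e : E, ~ a x e y /\ ~ a y e x.

Definition soft_a_T2 (X E : Type) (a : X -> soft_set X E) : Prop :=
  forall x y : X, x <> y -> forall e : E, forall z, ~ (a x e z /\ a y e z).

Definition soft_a_regular (X E : Type) (a : X -> soft_set X E) : Prop :=
  forall (x : X) (e : E) (C : soft_set X E),
    soft_a_closed a C -> ~ C e x ->
    exists U V : soft_set X E,
      soft_a_open a U /\ soft_a_open a V /\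
      U e x /\ (forall z, C e z -> V e z) /\ (forall z, ~ (U e z /\ V e z)).

Definition soft_a_T3 (X E : Type) (a : X -> soft_set X E) : Prop :=
  soft_a_regular a /\ soft_a_T1 a.

(* Main.v *)
Require Import Defs.
From Stdlib Require Import Classical.

Lemma t1_t2 (X E : Type) (a : X -> soft_set X E) (Hr : forall x e, a x e x) :
  soft_a_T1 a -> soft_a_T2 a.
Proof.
  intros H x y Hxy e z [H1 H2].
  destruct (classic (z = x)) as [->|Hzx].
  - exact (proj2 (H x y Hxy e) H2).
  - exact (proj1 (H x z (fun E' => Hzx (eq_sym E')) e) H1).
Qed.

Theorem theorem6p5 (X E : Type) (x0 : X) (e0 : E)
  (tau : soft_set X E -> Prop) (a : X -> soft_set X E)
  (Htau : soft_topology tau) (Ha : soft_scope tau a) :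
  (soft_a_T3 a -> soft_a_T2 a) /\
  (soft_a_T2 a <-> soft_a_T1 a) /\
  (soft_a_T1 a -> soft_a_T0 a).
Proof.
  destruct Ha as [_ Hr].
  split; [intros [_ H]; exact (@t1_t2 X E a Hr H)|].
  split; [split|].
  - intros H x y Hxy e. split; intro H1.
    + exact (H x y Hxy e y (conj H1 (Hr y e))).
    + exact (H x y Hxy e x (conj (Hr x e) H1)).
  - exact (@t1_t2 X E a Hr).
  - intros H x y Hxy. exists e0. left. exact (proj1 (H x y Hxy e0)).
Qed.
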